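(* Let $K$ be a unital commutative ring, let $A$ be a $K$-algebra, and let $L\subseteq A$ be a Lie ideal such that $[A,L^2]\subseteq L$. Then \[ A[L,L^2]A\subseteq A[L,L^2]\subseteq L^2. \] Moreover, if $L_0\subseteq L$ is a subset and $m,n\in\mathbb{N}$ satisfy $[A,L_0]_1\subseteq\Sigma^nL_0$ and $[L_0^{\cdot 2},A]_1\subseteq\Sigma^mL_0$, then \[ A\cdot[L_0,L_0^{\cdot 2}]_1\subseteq \Sigma^{2n+m}L_0^{\cdot 2}\quad\text{and}\quad A\cdot[L_0,L_0^{\cdot 2}]_1\cdot A\subseteq \Sigma^{(2n+m)(1+3n)}L_0^{\cdot 2}. \]
   Context: $K$-algebras are associative and not necessarily unital. For $x,y\in A$, $[x,y]=xy-yx$. For subsets $X,Y\subseteq A$: $[X,Y]$ is the additive subgroup generated by all $[x,y]$ ($x\in X,y\in Y$); $XY$ is the additive subgroup generated by all $xy$, $X^2=XX$, and $XYZ=(XY)Z$; $[X,Y]_1=\{[x,y]: x\in X,y\in Y\}$; $X\cdot Y=\{xy:x\in X,y\in Y\}$, $X^{\cdot 2}=X\cdot X$, and $X\cdot Y\cdot Z$ is the set of triple products $xyz$; $\Sigma^n X=\{x_1+\dots+x_n: x_i\in X\}$. A Lie ideal of $A$ is a $K$-linear subspace $L$ with $[A,L]\subseteq L$. *)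

(* Defs.v *)
From HB Require Import structures.
From mathcomp Require Import all_boot all_order all_algebra.
Set Implicit Arguments. Unset Strict Implicit. Unset Printing Implicit Defensive.
Import GRing.Theory.
Local Open Scope ring_scope.

Definition is_Kalgebra (K : comPzRingType) (A : lmodType K) (mul : A -> A -> A) : Prop :=
  [/\ (forall x y z, mul (mul x y) z = mul x (mul y z)),
      (forall x y z, mul (x + y) z = mul x z + mul y z),
      (forall x y z, mul x (y + z) = mul x y + mul x z),
      (forall (k : K) x y, mul (k *: x) y = k *: mul x y) &
      (forall (k : K) x y, mul x (k *: y) = k *: mul x y)].

Section Sets.
Variables (K : comPzRingType) (A : lmodType K) (mul : A -> A -> A).

Definition subs (X Y : A -> Prop) : Prop := forall x, X x -> Y x.

Definition setA : A -> Prop := fun _ => True.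

Inductive addgen (X : A -> Prop) : A -> Prop :=
| addgen_base x : X x -> addgen X x
| addgen_0 : addgen X 0
| addgen_add x y : addgen X x -> addgen X y -> addgen X (x + y)
| addgen_opp x : addgen X x -> addgen X (- x).

Definition lie (x y : A) : A := mul x y - mul y x.

(* [X,Y]_1 : set of commutators *)
Definition lie1 (X Y : A -> Prop) : A -> Prop :=
  fun z => exists x y, X x /\ Y y /\ z = lie x y.
(* [X,Y] : additive subgroup generated by commutators *)
Definition lieS (X Y : A -> Prop) : A -> Prop := addgen (lie1 X Y).

(* X . Y : set of products *)
Definition dot (X Y : A -> Prop) : A -> Prop :=
  fun z => exists x y, X x /\ Y y /\ z = mul x y.
Definition dot3 (X Y Z : A -> Prop) : A -> Prop :=
  fun w => exists x y z, X x /\ Y y /\ Z z /\ w = mul (mul x y) z.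
(* XY : additive subgroup generated by products *)
Definition prodS (X Y : A -> Prop) : A -> Prop := addgen (dot X Y).

(* Sigma^n X : sums of n elements of X *)
Definition sigma (n : nat) (X : A -> Prop) : A -> Prop :=
  fun z => exists s : 'I_n -> A, (forall i, X (s i)) /\ z = \sum_(i < n) s i.

Definition lie_ideal (L : A -> Prop) : Prop :=
  [/\ L 0, (forall x y, L x -> L y -> L (x + y)),
      (forall (k : K) x, L x -> L (k *: x)) &
      subs (lieS setA L) L].
End Sets.

(* Main.v *)
Require Import Defs.
From mathcomp Require Import all_boot all_order all_algebra.
From mathcomp Require Import zify.
Set Implicit Arguments. Unset Strict Implicit.
Import GRing.Theory.
Local Open Scope ring_scope.

Lemma mulDl' (K : comPzRingType) (A : lmodType K) (mul : A -> A -> A)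
  (H : is_Kalgebra mul) x y z : mul (x + y) z = mul x z + mul y z.
Proof. by case: H. Qed.
Lemma mulDr' (K : comPzRingType) (A : lmodType K) (mul : A -> A -> A)
  (H : is_Kalgebra mul) x y z : mul x (y + z) = mul x y + mul x z.
Proof. by case: H. Qed.
Lemma mulA' (K : comPzRingType) (A : lmodType K) (mul : A -> A -> A)
  (H : is_Kalgebra mul) x y z : mul (mul x y) z = mul x (mul y z).
Proof. by case: H. Qed.
Lemma mul0l' (K : comPzRingType) (A : lmodType K) (mul : A -> A -> A)
  (H : is_Kalgebra mul) z : mul 0 z = 0.
Proof. by apply: (addrI (mul 0 z)); rewrite addr0 -mulDl' // addr0. Qed.
Lemma mul0r' (K : comPzRingType) (A : lmodType K) (mul : A -> A -> A)
  (H : is_Kalgebra mul) z : mul z 0 = 0.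
Proof. by apply: (addrI (mul z 0)); rewrite addr0 -mulDr' // addr0. Qed.
Lemma mulNl' (K : comPzRingType) (A : lmodType K) (mul : A -> A -> A)
  (H : is_Kalgebra mul) x z : mul (- x) z = - mul x z.
Proof. by apply: (addrI (mul x z)); rewrite -mulDl' // !subrr mul0l'. Qed.
Lemma mulNr' (K : comPzRingType) (A : lmodType K) (mul : A -> A -> A)
  (H : is_Kalgebra mul) x z : mul z (- x) = - mul z x.
Proof. by apply: (addrI (mul z x)); rewrite -mulDr' // !subrr mul0r'. Qed.
Lemma mulBl' (K : comPzRingType) (A : lmodType K) (mul : A -> A -> A)
  (H : is_Kalgebra mul) x y z : mul (x - y) z = mul x z - mul y z.
Proof. by rewrite mulDl' // mulNl'. Qed.
Lemma mulBr' (K : comPzRingType) (A : lmodType K) (mul : A -> A -> A)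
  (H : is_Kalgebra mul) x y z : mul z (x - y) = mul z x - mul z y.
Proof. by rewrite mulDr' // mulNr'. Qed.

Lemma ztrans (V : zmodType) (x y z : V) : x - y + (y - z) = x - z.
Proof. by rewrite addrA subrK. Qed.
Lemma zjac (V : zmodType) (p q r s t u : V) :
  p - q + (r - s) = p - t + (r - u) + (t - s + (u - q)).
Proof.
rewrite [RHS]addrACA ztrans ztrans addrACA [RHS]addrACA [(- s) + _]addrC.
by [].
Qed.
Lemma zi2 (V : zmodType) (x y : V) : y = x + - (x - y).
Proof. by rewrite opprB addrC subrK. Qed.

Ltac expand H := rewrite /lie ?(mulBl' H, mulBr' H, mulDl' H, mulDr' H, mulNl' H, mulNr' H, mulA' H).

Lemma lie_der (K : comPzRingType) (A : lmodType K) (mul : A -> A -> A)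
  (H : is_Kalgebra mul) b x y :
  lie mul b (mul x y) = mul (lie mul b x) y + mul x (lie mul b y).
Proof. expand H. by rewrite addrA subrK. Qed.

Lemma lie_jac (K : comPzRingType) (A : lmodType K) (mul : A -> A -> A)
  (H : is_Kalgebra mul) b l w :
  lie mul b (lie mul l w) = lie mul (lie mul b l) w + lie mul l (lie mul b w).
Proof. expand H. rewrite ?opprB. exact: zjac. Qed.

Lemma lie_J1 (K : comPzRingType) (A : lmodType K) (mul : A -> A -> A)
  (H : is_Kalgebra mul) a l w :
  mul a (lie mul l w) = lie mul (mul a l) w + mul (lie mul w a) l.
Proof. expand H. by rewrite ztrans. Qed.

Lemma lie_I2 (K : comPzRingType) (A : lmodType K) (mul : A -> A -> A)
  (H : is_Kalgebra mul) a b c :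
  mul (mul a c) b = mul (mul a b) c + mul (- a) (lie mul b c).
Proof. expand H. by rewrite opprK addNKr. Qed.

Lemma lieDr (K : comPzRingType) (A : lmodType K) (mul : A -> A -> A)
  (H : is_Kalgebra mul) z x y : lie mul z (x + y) = lie mul z x + lie mul z y.
Proof. expand H. by rewrite opprD addrACA. Qed.
Lemma lieDl (K : comPzRingType) (A : lmodType K) (mul : A -> A -> A)
  (H : is_Kalgebra mul) z x y : lie mul (x + y) z = lie mul x z + lie mul y z.
Proof. expand H. by rewrite opprD addrACA. Qed.
Lemma lie0r (K : comPzRingType) (A : lmodType K) (mul : A -> A -> A)
  (H : is_Kalgebra mul) z : lie mul z 0 = 0.
Proof. by rewrite /lie mul0l' // mul0r' // subrr. Qed.
Lemma lie0l (K : comPzRingType) (A : lmodType K) (mul : A -> A -> A)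
  (H : is_Kalgebra mul) z : lie mul 0 z = 0.
Proof. by rewrite /lie mul0l' // mul0r' // subrr. Qed.
Lemma lieNr (K : comPzRingType) (A : lmodType K) (mul : A -> A -> A)
  (H : is_Kalgebra mul) z x : lie mul z (- x) = - lie mul z x.
Proof. expand H. by rewrite opprB opprK addrC. Qed.
Lemma lieNl (K : comPzRingType) (A : lmodType K) (mul : A -> A -> A)
  (H : is_Kalgebra mul) z x : lie mul (- x) z = - lie mul x z.
Proof. expand H. by rewrite opprB opprK addrC. Qed.
Lemma lie_anti (K : comPzRingType) (A : lmodType K) (mul : A -> A -> A)
  z x : lie mul z x = - lie mul x z.
Proof. by rewrite /lie opprB. Qed.

Lemma sigma_add (K : comPzRingType) (A : lmodType K) (X : A -> Prop) p q z1 z2 :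
  sigma p X z1 -> sigma q X z2 -> sigma (p + q) X (z1 + z2).
Proof.
move=> [s1 [Hs1 ->]] [s2 [Hs2 ->]].
exists (fun i => match split i with inl j => s1 j | inr k => s2 k end); split.
  by move=> i; case: (split i).
rewrite big_split_ord /=; congr (_ + _); apply: eq_bigr => i _.
  by rewrite (unsplitK (inl i)).
by rewrite (unsplitK (inr i)).
Qed.

Lemma sigma0 (K : comPzRingType) (A : lmodType K) (X : A -> Prop) :
  sigma 0 X 0.
Proof. by exists (fun _ => 0); split; [case | rewrite big_ord0]. Qed.

Lemma sigma_map (K : comPzRingType) (A : lmodType K) (X Y : A -> Prop) (f : A -> A)
  n z : f 0 = 0 -> (forall x y, f (x + y) = f x + f y) ->
  (forall x, X x -> Y (f x)) -> sigma n X z -> sigma n Y (f z).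
Proof.
move=> f0 fD fXY [s [Hs ->]]; exists (fun i => f (s i)); split; first by move=> i; apply: fXY.
by elim/big_rec2: _ => [|i y1 y2 _ <-]; [exact: f0 | exact: fD].
Qed.

Lemma sigma_bind (K : comPzRingType) (A : lmodType K) (X Y : A -> Prop) (f : A -> A)
  p k z : f 0 = 0 -> (forall x y, f (x + y) = f x + f y) ->
  (forall x, X x -> sigma k Y (f x)) -> sigma p X z -> sigma (p * k) Y (f z).
Proof.
move=> f0 fD fXY [s [Hs ->]]; elim: p s Hs => [|p IH] s Hs.
  by rewrite big_ord0 f0 mul0n; apply: sigma0.
rewrite big_ord_recl fD mulSn; apply: sigma_add; first exact: fXY.
exact: IH.
Qed.

Theorem lemma3p3 (K : comPzRingType) (A : lmodType K) (mul : A -> A -> A)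
  (Halg : is_Kalgebra mul) (L : A -> Prop)
  (HL : lie_ideal mul L)
  (HL2 : subs (lieS mul (@setA _ A) (prodS mul L L)) L) :
  let L2 := prodS mul L L in
  let C := lieS mul L L2 in
  (subs (prodS mul (prodS mul (@setA _ A) C) (@setA _ A)) (prodS mul (@setA _ A) C)
   /\ subs (prodS mul (@setA _ A) C) L2)
  /\
  (forall (L0 : A -> Prop) (m n : nat),
     subs L0 L ->
     subs (lie1 mul (@setA _ A) L0) (sigma n L0) ->
     subs (lie1 mul (dot mul L0 L0) (@setA _ A)) (sigma m L0) ->
     subs (dot mul (@setA _ A) (lie1 mul L0 (dot mul L0 L0)))
          (sigma (2 * n + m)%N (dot mul L0 L0))
     /\ subs (dot3 mul (@setA _ A) (lie1 mul L0 (dot mul L0 L0)) (@setA _ A))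
          (sigma ((2 * n + m)%N * (1 + 3 * n)) (dot mul L0 L0))).
Proof.
move=> L2 C.
have H := Halg.
case: HL => HL0 HLD HLZ HLlie.
have Lneg x : L x -> L (- x) by move=> Lx; rewrite -scaleN1r; apply: HLZ.
have Llie z u : L u -> L (lie mul z u).
  by move=> Lu; apply: HLlie; apply: addgen_base; exists z, u.
have L2L a w : L2 w -> L (lie mul a w).
  by move=> Lw; apply: HL2; apply: addgen_base; exists a, w.
have P1 z w : L2 w -> L2 (lie mul z w).
  elim=> [x [u [v [Lu [Lv ->]]]]| |x y _ Hx _ Hy|x _ Hx].
  - rewrite lie_der //; apply: addgen_add; apply: addgen_base.
      by exists (lie mul z u), v; split; [exact: Llie | split].
    by exists u, (lie mul z v); split => //; split; [exact: Llie | ].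
  - by rewrite lie0r //; apply: addgen_0.
  - by rewrite lieDr //; apply: addgen_add.
  - by rewrite lieNr //; apply: addgen_opp.
have AC_L2 a c : C c -> L2 (mul a c).
  elim=> [x [l [w [Ll [Lw ->]]]]| |x y _ Hx _ Hy|x _ Hx].
  - rewrite lie_J1 //; apply: addgen_add; first exact: P1.
    apply: addgen_base; exists (lie mul w a), l; split => //.
    by rewrite lie_anti; apply: Lneg; apply: L2L.
  - by rewrite mul0r' //; apply: addgen_0.
  - by rewrite mulDr' //; apply: addgen_add.
  - by rewrite mulNr' //; apply: addgen_opp.
have C_lie b c : C c -> C (lie mul b c).
  elim=> [x [l [w [Ll [Lw ->]]]]| |x y _ Hx _ Hy|x _ Hx].
  - rewrite lie_jac //; apply: addgen_add; apply: addgen_base.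
      by exists (lie mul b l), w; split => //; apply: Llie.
    by exists l, (lie mul b w); split => //; split => //; apply: P1.
  - by rewrite lie0r //; apply: addgen_0.
  - by rewrite lieDr //; apply: addgen_add.
  - by rewrite lieNr //; apply: addgen_opp.
have ACA b x : prodS mul (@setA _ A) C x -> prodS mul (@setA _ A) C (mul x b).
  elim=> [x0 [a [c [_ [Cc ->]]]]| |x1 y1 _ Hx _ Hy|x1 _ Hx].
  - rewrite lie_I2 //; apply: addgen_add; apply: addgen_base.
      by exists (mul a b), c.
    by exists (- a), (lie mul b c); split => //; split => //; apply: C_lie.
  - by rewrite mul0l' //; apply: addgen_0.
  - by rewrite mulDl' //; apply: addgen_add.
  - by rewrite mulNl' //; apply: addgen_opp.
split.
  split.
    move=> z; elim=> [x0 [x [b [Hx [_ ->]]]]| |x1 y1 _ Hx _ Hy|x1 _ Hx].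
    - exact: ACA.
    - exact: addgen_0.
    - exact: addgen_add.
    - exact: addgen_opp.
  move=> z; elim=> [x0 [a [c [_ [Cc ->]]]]| |x1 y1 _ Hx _ Hy|x1 _ Hx].
  - exact: AC_L2.
  - exact: addgen_0.
  - exact: addgen_add.
  - exact: addgen_opp.
move=> L0 m n _ h1 h2.
have mulr0 (a : A) : mul a 0 = 0 by rewrite mul0r'.
have mull0 (a : A) : mul 0 a = 0 by rewrite mul0l'.
have P2a a l x y : L0 l -> L0 x -> L0 y ->
    sigma (2 * n + m) (dot mul L0 L0) (mul a (lie mul l (mul x y))).
  move=> l0 x0 y0.
  have -> : (2 * n + m = n + n + m)%N by lia.
  rewrite lie_J1 // lie_der //.
  apply: sigma_add; first apply: sigma_add.
  - apply: (sigma_map (X := L0) (f := fun t => mul t y)).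
    + exact: mull0.
    + by move=> u v; rewrite mulDl'.
    + by move=> u Lu; exists u, y.
    + by apply: h1; exists (mul a l), x.
  - apply: (sigma_map (X := L0) (f := fun t => mul x t)).
    + exact: mulr0.
    + by move=> u v; rewrite mulDr'.
    + by move=> u Lu; exists x, u.
    + by apply: h1; exists (mul a l), y.
  - apply: (sigma_map (X := L0) (f := fun t => mul t l)).
    + exact: mull0.
    + by move=> u v; rewrite mulDl'.
    + by move=> u Lu; exists u, l.
    + by apply: h2; exists (mul x y), a; split => //; exists x, y.
split.
  move=> z [a [c [_ [[l [w [l0 [Hw ->]]]] ->]]]]; case: Hw => [x [y [x0 [y0 ->]]]].
  exact: P2a.
move=> z [a [c [b [_ [[l [w [l0 [Hw ->]]]] [_ ->]]]]]]; case: Hw => [x [y [x0 [y0 ->]]]].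
have -> : ((2 * n + m) * (1 + 3 * n) = (2 * n + m) + (n + (n + n)) * (2 * n + m))%N by lia.
rewrite lie_I2 //; apply: sigma_add; first exact: P2a.
apply: (sigma_bind (X := lie1 mul L0 (dot mul L0 L0))).
- exact: mulr0.
- by move=> u v; rewrite mulDr'.
- move=> u [l' [w' [l'0 [Hw ->]]]]; case: Hw => [x' [y' [x'0 [y'0 ->]]]]; exact: P2a.
rewrite lie_jac // (lie_der H b x y) lieDr //.
apply: sigma_add; last apply: sigma_add.
- apply: (sigma_map (X := L0) (f := fun t => lie mul t (mul x y))).
  + by rewrite lie0l.
  + by move=> u v; rewrite lieDl.
  + by move=> u Lu; exists u, (mul x y); split => //; split => //; exists x, y.
  + by apply: h1; exists b, l.
- apply: (sigma_map (X := L0) (f := fun t => lie mul l (mul t y))).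
  + by rewrite mull0 lie0r.
  + by move=> u v; rewrite mulDl' // lieDr.
  + by move=> u Lu; exists l, (mul u y); split => //; split => //; exists u, y.
  + by apply: h1; exists b, x.
- apply: (sigma_map (X := L0) (f := fun t => lie mul l (mul x t))).
  + by rewrite mulr0 lie0r.
  + by move=> u v; rewrite mulDr' // lieDr.
  + by move=> u Lu; exists l, (mul x u); split => //; split => //; exists x, u.
  + by apply: h1; exists b, y.
Qed.
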